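(* Let $v,w$ be positive integers, $\theta\in[0,1]$, and let $K_{v,w}$ be the complete bipartite graph with parts $V$, $W$, $|V|=v$, $|W|=w$. Let $X$ be the capture time (the number of the move at which capture occurs) in the tipsy cop and drunken robber game on $K_{v,w}$, and let $\mathbb{E}^i[X]$ be its expectation when the game starts in Position $i$ (whenever that position exists). Then \begin{align*} \mathbb{E}^1[X]&=\frac{4vw-3w-v+1}{v+w-1}, & \mathbb{E}^2[X]&=\frac{2\,(vw+\theta v(w-1))}{vw-\theta^2(v-1)(w-1)},\\ \mathbb{E}^3[X]&=\frac{4vw-3v-w+1}{v+w-1}, & \mathbb{E}^4[X]&=\frac{2\,(vw+\theta w(v-1))}{vw-\theta^2(v-1)(w-1)}. \end{align*}
   Context: Tipsy cop and drunken robber game on a finite connected graph $G$: a cop and a robber are placed at distinct vertices. Moves are numbered $1,2,3,\dots$; the robber makes the odd-numbered moves and the cop the even-numbered moves, and on each move the mover must move to a vertex adjacent to its current vertex (staying put is not allowed). The robber always moves to a neighbor chosen uniformly at random. The cop, independently at each of her moves, with probability $\theta$ moves to a neighbor chosen uniformly at random, and with probability $1-\theta$ makes a directed move to a neighbor lying on a shortest path to the robber's current vertex (in particular onto the robber's vertex if it is adjacent). All random choices are independent. The robber is captured (and the game ends) as soon as both occupy the same vertex. Starting positions on $K_{v,w}$: Position 1: the cop is at a vertex of $V$ and the robber at a vertex of $W$; Position 2: cop and robber are at two distinct vertices of $V$; Position 3: the robber is at a vertex of $V$ and the cop at a vertex of $W$; Position 4: cop and robber are at two distinct vertices of $W$.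 *)

(* Defs.v *)
From HB Require Import structures.
From mathcomp Require Import all_boot all_order all_algebra.
From mathcomp Require Import all_classical all_reals all_analysis.
Set Implicit Arguments. Unset Strict Implicit. Unset Printing Implicit Defensive.
Import Order.TTheory GRing.Theory Num.Theory.
Import numFieldNormedType.Exports.
Local Open Scope classical_set_scope.
Local Open Scope ring_scope.

Section Game.
Variables (R : realType) (T : finType) (e : rel T).

Definition nbr (x : T) : {set T} := [set y | e x y].
Definition deg (x : T) : nat := #|nbr x|.

Fixpoint ball (n : nat) (x : T) : {set T} :=
  match n with
  | 0 => [set x]
  | n'.+1 => ball n' x :|: \bigcup_(y in ball n' x) nbr y
  end.

(* graph distance (correct on connected graphs, where it is < #|T|) *)
Definition gdist (x y : T) : nat := find (fun n => y \in ball n x) (iota 0 #|T|).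

Definition sp_nbr (c r : T) : {set T} :=
  [set y in nbr c | (gdist y r).+1 == gdist c r].

Definition robber_tr (c r c' r' : T) : R :=
  if (c' == c) && e r r' then (deg r)%:R^-1 else 0.

Definition cop_tr (theta : R) (c r c' r' : T) : R :=
  if r' == r then
    theta * (if e c c' then (deg c)%:R^-1 else 0)
    + (1 - theta) * (if c' \in sp_nbr c r then (#|sp_nbr c r|%:R)^-1 else 0)
  else 0.

(* transition from time n to time n+1 (i.e. move number n+1):
   odd moves (n even) are robber moves, even moves (n odd) are cop moves *)
Definition tr (theta : R) (n : nat) : T -> T -> T -> T -> R :=
  if odd n then cop_tr theta else robber_tr.

(* alive theta c0 r0 n c r = probability that after n moves the game is not
   over and the cop is at c and the robber at r *)
Fixpoint alive (theta : R) (c0 r0 : T) (n : nat) : T -> T -> R :=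
  match n with
  | 0 => fun c r => if (c == c0) && (r == r0) then 1 else 0
  | n'.+1 => fun c' r' =>
      if c' == r' then 0
      else \sum_(c : T) \sum_(r : T) alive theta c0 r0 n' c r * tr theta n' c r c' r'
  end.

(* probability that the capture time X equals n+1 *)
Definition capt (theta : R) (c0 r0 : T) (n : nat) : R :=
  \sum_(c : T) \sum_(r : T)
     alive theta c0 r0 n c r * \sum_(x : T) tr theta n c r x x.

(* capture happens almost surely and E[X] = sum_n n P(X = n) equals l *)
Definition expected_capture_time (theta : R) (c0 r0 : T) (l : R) : Prop :=
  (fun N : nat => \sum_(n < N) capt theta c0 r0 n) @ \oo --> (1 : R) /\
  (fun N : nat => \sum_(n < N) (n.+1)%:R * capt theta c0 r0 n) @ \oo --> l.

End Game.

(* complete bipartite graph K_{v,w}: V = inl 'I_v, W = inr 'I_w *)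
Definition Kbip (v w : nat) : rel ('I_v + 'I_w)%type :=
  fun x y => match x, y with
             | inl _, inr _ | inr _, inl _ => true
             | _, _ => false
             end.
Arguments Kbip : clear implicits.

(* Main.v *)
Require Import Defs.
From HB Require Import structures.
From mathcomp Require Import all_boot all_order all_algebra.
From mathcomp Require Import all_classical all_reals all_analysis.
From mathcomp Require Import ring lra zify.
Import Order.TTheory GRing.Theory Num.Theory.
Import numFieldNormedType.Exports.
Local Open Scope ring_scope.

Section An.
Variable R : realType.
Local Open Scope classical_set_scope.

Lemma ns_cvg0 (s : R) : 0 <= s -> s < 1 ->
  (fun n : nat => n%:R * s ^+ n) @ \oo --> (0:R).
Proof.
move=> s0 s1; set r := (1 + s) / 2.
have r0 : 0 <= r by rewrite /r; lra.
have r1 : r < 1 by rewrite /r; lra.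
have sr : s <= r ^+ 2 by rewrite /r; nra.
have g : forall n : nat, n%:R * r ^+ n * (1 - r) + r ^+ n <= 1.
  elim=> [|n IH]; first by rewrite mul0r mul0r add0r expr0.
  apply: le_trans IH.
  have t0 : 0 <= r ^+ n by rewrite exprn_ge0.
  have n0 : 0 <= n%:R :> R by [].
  rewrite exprS -natr1.
  have : 0 <= r ^+ n * ((1 - r) ^+ 2 * (n%:R + 1)).
    by apply: mulr_ge0 => //; apply: mulr_ge0; rewrite ?sqr_ge0 //; lra.
  nra.
apply: (@squeeze_cvgr _ _ _ _ (cst 0) (fun n => (1 - r)^-1 * r ^+ n)).
- apply: nearW => n /=.
  have t0 : 0 <= r ^+ n by rewrite exprn_ge0.
  have n0 : 0 <= n%:R :> R by [].
  apply/andP; split; first by apply: mulr_ge0 => //; rewrite exprn_ge0.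
  have h1 : s ^+ n <= r ^+ n * r ^+ n.
    have : s ^+ n <= (r ^+ 2) ^+ n by apply: lerXn2r; rewrite // nnegrE // sqr_ge0.
    by rewrite -exprM mulnC exprM expr2.
  have h2 : n%:R * r ^+ n <= (1 - r)^-1.
    rewrite -(mul1r (1 - r)^-1) ler_pdivlMr ?subr_gt0 //; have := g n; nra.
  apply: (le_trans (ler_wpM2l n0 h1)); rewrite mulrA.
  by apply: ler_wpM2r.
- exact: cvg_cst.
- rewrite -(mulr0 (1 - r)^-1); apply: cvgMl_tmp; apply: cvg_expr.
  by rewrite ger0_norm.
Qed.

Lemma per4_cvg (u : nat -> R) (P : R) : 0 <= P -> P < 1 ->
  (forall n, u (n + 4)%N = P * u n) ->
  (u @ \oo --> (0:R)) /\ ((fun n : nat => n%:R * u n) @ \oo --> (0:R)).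
Proof.
move=> P0 P1 Hu.
set s := 1 - (1 - P) / 4.
have s0 : 3/4 <= s by rewrite /s; lra.
have s1 : s < 1 by rewrite /s; lra.
have sP : P <= s ^+ 4.
  have -> : s ^+ 4 = (s * s) * (s * s) by rewrite !exprS expr0 mulr1 !mulrA.
  rewrite /s; set x := (1 - P) / 4.
  have x0 : 0 <= x by rewrite /x; lra.
  have x1 : x <= 1/4 by rewrite /x; lra.
  have -> : P = 1 - 4 * x by rewrite /x; field.
  nra.
have sp : 0 < s by lra.
set C := (`|u 0%N| + `|u 1%N| + `|u 2%N| + `|u 3%N|) / s ^+ 3.
have C0 : 0 <= C by rewrite /C; apply: divr_ge0; rewrite ?exprn_ge0 //; lra.
have s3 : forall j, (j <= 3)%N -> s ^+ 3 <= s ^+ j.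
  move=> j hj; rewrite -(subnK hj) exprD ler_piMl ?exprn_ge0 //.
  - exact: ltW.
  - by apply: exprn_ile1; [exact: ltW | exact: ltW].
have base : forall j, (j <= 3)%N -> `|u j| <= C * s ^+ j.
  move=> j hj; apply: (@le_trans _ _ (C * s ^+ 3)); last first.
    by apply: ler_wpM2l => //; apply: s3.
  rewrite /C mulfVK; last by rewrite expf_neq0 // gt_eqF.
  have := normr_ge0 (u 0%N); have := normr_ge0 (u 1%N).
  have := normr_ge0 (u 2%N); have := normr_ge0 (u 3%N).
  by move: hj; case: j => [|[|[|[|]]]] //= _; lra.
have B : forall n, `|u n| <= C * s ^+ n.
  have : forall k, `|u k| <= C * s ^+ k /\ `|u k.+1| <= C * s ^+ k.+1 /\
     `|u k.+2| <= C * s ^+ k.+2 /\ `|u k.+3| <= C * s ^+ k.+3.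
    elim=> [|k [h0 [h1 [h2 h3]]]]; first by split; [|split; [|split]]; apply: base.
    split; [done|split; [done|split; [done|]]].
    have -> : k.+4 = (k + 4)%N by rewrite addnC.
    rewrite Hu normrM (ger0_norm P0) exprD.
    apply: (le_trans (ler_wpM2l P0 h0)).
    have sk : 0 <= C * s ^+ k by apply: mulr_ge0 => //; rewrite exprn_ge0 //; exact: ltW.
    have := ler_wpM2r sk sP.
    by move=> h; apply: (le_trans h); rewrite le_eqVlt; apply/orP; left; apply/eqP; ring.
  by move=> H n; case: (H n).
split.
- apply: (@squeeze_cvgr _ _ _ _ (fun n => - (C * s ^+ n)) (fun n => C * s ^+ n)).
  + by apply: nearW => n; rewrite -ler_norml.
  + rewrite -oppr0 -(mulr0 C); apply: cvgN; apply: cvgMl_tmp; apply: cvg_expr.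
    by rewrite ger0_norm; lra.
  + rewrite -(mulr0 C); apply: cvgMl_tmp; apply: cvg_expr.
    by rewrite ger0_norm; lra.
- apply: (@squeeze_cvgr _ _ _ _ (fun n => - (C * (n%:R * s ^+ n)))
     (fun n => C * (n%:R * s ^+ n))).
  + apply: nearW => n; rewrite -ler_norml normrM normr_nat mulrCA.
    by apply: ler_wpM2l => //; rewrite mulrC.
  + rewrite -oppr0 -(mulr0 C); apply: cvgN; apply: cvgMl_tmp; apply: ns_cvg0; lra.
  + rewrite -(mulr0 C); apply: cvgMl_tmp; apply: ns_cvg0; lra.
Qed.


Lemma per_mod (f : nat -> R) : (forall n, f (n + 4)%N = f n) -> forall n, f n = f (n %% 4)%N.
Proof.
move=> H n; rewrite {1}(divn_eq n 4); elim: (n %/ 4)%N => [|k IH].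
  by rewrite mul0n add0n.
have -> : (k.+1 * 4 + n %% 4 = (k * 4 + n %% 4) + 4)%N by rewrite mulSn; lia.
by rewrite H.
Qed.

Lemma modS4 n : (n.+1 %% 4 = (n %% 4).+1 %% 4)%N.
Proof. by rewrite -addn1 -modnDml addn1. Qed.

Definition q4 (a0 a1 a2 a3 : R) (k : nat) : R :=
  match k with 0 => a0 | 1 => a1 | 2 => a2 | _ => a3 end.

Lemma chain4 (m cp : nat -> R) (c0 c1 c2 c3 V0 V1 V2 V3 : R) :
  m 0%N = 1 -> (forall n, m n.+1 = m n * (1 - cp n)) ->
  (forall n, cp (n + 4)%N = cp n) ->
  cp 0%N = c0 -> cp 1%N = c1 -> cp 2%N = c2 -> cp 3%N = c3 ->
  V0 = 1 + (1 - c0) * V1 -> V1 = 1 + (1 - c1) * V2 ->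
  V2 = 1 + (1 - c2) * V3 -> V3 = 1 + (1 - c3) * V0 ->
  0 <= (1 - c0) * (1 - c1) * (1 - c2) * (1 - c3) ->
  (1 - c0) * (1 - c1) * (1 - c2) * (1 - c3) < 1 ->
  (fun N : nat => \sum_(n < N) m n * cp n) @ \oo --> (1:R) /\
  (fun N : nat => \sum_(n < N) (n.+1)%:R * (m n * cp n)) @ \oo --> V0.
Proof.
move=> m0 mS cpP e0 e1 e2 e3 v0 v1 v2 v3 P0 P1.
set P := (1 - c0) * (1 - c1) * (1 - c2) * (1 - c3).
have cpE : forall n, cp n = q4 c0 c1 c2 c3 (n %% 4)%N.
  move=> n; rewrite (@per_mod cp cpP n).
  have : (n %% 4 < 4)%N by rewrite ltn_pmod.
  by case: (n %% 4)%N => [|[|[|[|k]]]] hk; rewrite ?e0 ?e1 ?e2 ?e3 //; rewrite !ltnS ltn0 in hk.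
set V := fun n => q4 V0 V1 V2 V3 (n %% 4)%N.
have VS : forall n, V n = 1 + (1 - cp n) * V n.+1.
  move=> n; rewrite /V cpE modS4.
  have : (n %% 4 < 4)%N by rewrite ltn_pmod.
  by case: (n %% 4)%N => [|[|[|[|k]]]] hk //; rewrite !ltnS ltn0 in hk.
have m4 : forall n, m (n + 4)%N = P * m n.
  move=> n.
  have -> : m (n + 4)%N = m n * (1 - cp n) * (1 - cp (n + 1)%N) * (1 - cp (n + 2)%N)
      * (1 - cp (n + 3)%N) by rewrite !addnS !addn0 !mS.
  rewrite !cpE -[((n + 1) %% 4)%N]modnDml -[((n + 2) %% 4)%N]modnDml.
  rewrite -[((n + 3) %% 4)%N]modnDml /P.
  have : (n %% 4 < 4)%N by rewrite ltn_pmod.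
  by case: (n %% 4)%N => [|[|[|[|k]]]] hk /=; try ring; rewrite !ltnS ltn0 in hk.
have mV4 : forall n, (fun n => m n * V n) (n + 4)%N = P * (fun n => m n * V n) n.
  move=> n /=; rewrite m4 /V -modnDmr modnn addn0; ring.
have [mc0 nmc0] := @per4_cvg m P P0 P1 m4.
have [mVc0 _] := @per4_cvg _ P P0 P1 mV4.
have S1 : forall N, \sum_(n < N) m n * cp n = 1 - m N.
  elim=> [|N IH]; first by rewrite big_ord0 m0 subrr.
  by rewrite big_ord_recr /= IH mS; ring.
have S2 : forall N, \sum_(n < N) (n.+1)%:R * (m n * cp n) = V0 - (N%:R * m N + m N * V N).
  elim=> [|N IH]; first by rewrite big_ord0 m0 /V /= mul0r add0r mul1r subrr.
  rewrite big_ord_recr /= IH mS (VS N) -natr1; ring.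
split.
- rewrite (_ : (fun N => _) = (fun N => 1 - m N)); last by apply: funext => N; exact: S1.
  rewrite -[X in _ --> X]subr0; apply: cvgB => //; exact: cvg_cst.
- rewrite (_ : (fun N => _) = (fun N => V0 - (N%:R * m N + m N * V N))); last first.
    by apply: funext => N; exact: S2.
  rewrite -[X in _ --> X]subr0; apply: cvgB; first exact: cvg_cst.
  rewrite -[0]addr0; exact: cvgD.
Qed.

End An.

Section Graph.
Variables (v w : nat).
Hypotheses (hv : (0 < v)%N) (hw : (0 < w)%N).
Local Notation T := ('I_v + 'I_w)%type.
Local Notation E := (Kbip v w).

Definition side (x : T) : bool := if x is inl _ then true else false.
Definition sz (b : bool) : nat := if b then v else w.

Lemma EE x y : E x y = (side x != side y).
Proof. by case: x => a; case: y => b. Qed.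

Lemma card_side b : #|[set y : T | side y == b]| = sz b.
Proof.
case: b => /=.
- have -> : [set y : T | side y == true] = inl @: [set: 'I_v].
    apply/setP => y; rewrite !inE; case: y => a /=.
    + by apply/esym/imsetP; exists a; rewrite ?inE.
    + by apply/esym/imsetP => -[b _].
  by rewrite card_imset ?cardsT ?card_ord //; move=> a b [].
- have -> : [set y : T | side y == false] = inr @: [set: 'I_w].
    apply/setP => y; rewrite !inE; case: y => a /=.
    + by apply/esym/imsetP => -[b _].
    + by apply/esym/imsetP; exists a; rewrite ?inE.
  by rewrite card_imset ?cardsT ?card_ord //; move=> a b [].
Qed.

Lemma degE x : deg E x = sz (~~ side x).
Proof.
rewrite /deg -card_side; apply: eq_card => y; rewrite !inE EE.
by case: (side x); case: (side y).
Qed.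

Lemma deg_gt0 x : (0 < deg E x)%N.
Proof. by rewrite degE; case: (side x). Qed.

Lemma cardT : #|{: T}| = (v + w)%N.
Proof. by rewrite card_sum !card_ord. Qed.

Lemma in_ball0 x y : (y \in Defs.ball E 0 x) = (y == x).
Proof. by rewrite /= inE. Qed.

Lemma in_ball1 x y : (y \in Defs.ball E 1 x) = (y == x) || E x y.
Proof. by rewrite /= big_set1 !inE. Qed.

Lemma in_ball2 x y : y \in Defs.ball E 2 x.
Proof.
rewrite [Defs.ball E 2 x]/= finset.in_setU; apply/orP.
case: (boolP (y \in Defs.ball E 1 x)) => [h|]; first by left.
rewrite in_ball1 negb_or => /andP[nyx nxy]; right.
apply/bigcupP.
exists (if x is inl _ then inr (Ordinal hw) else inl (Ordinal hv)).
  by rewrite in_ball1; apply/orP; right; rewrite EE; case: x {nyx nxy}.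
rewrite inE EE; move: nxy; rewrite EE; case: x {nyx} => a; case: y => b //.
Qed.

Lemma gdist0 x y : (gdist E x y == 0%N) = (y == x).
Proof.
rewrite /gdist cardT; case: (v + w)%N (addn_gt0 v w) => [|k] /=; first by rewrite hv.
by rewrite in_ball0; case: (y == x).
Qed.

Lemma gdist1 x y : E x y -> gdist E x y = 1%N.
Proof.
move=> hxy; rewrite /gdist cardT.
have : (1 < v + w)%N by lia.
case: (v + w)%N => [|[|k]] //= _.
rewrite in_ball0 in_ball1 hxy orbT.
have -> : (y == x) = false by apply/negbTE; apply/eqP => yx; move: hxy; rewrite yx EE eqxx.
by [].
Qed.

Lemma gdist2 x y : x != y -> ~~ E x y -> gdist E x y = 2%N.
Proof.
move=> nxy nexy.
have h3 : (2 < v + w)%N.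
  move: nexy nxy; rewrite EE negbK; case: x => a; case: y => b //= _.
  - move=> hab; have : (nat_of_ord a != nat_of_ord b).
      by apply: contra hab => /eqP/val_inj ->.
    have := ltn_ord a; have := ltn_ord b; lia.
  - move=> hab; have : (nat_of_ord a != nat_of_ord b).
      by apply: contra hab => /eqP/val_inj ->.
    have := ltn_ord a; have := ltn_ord b; lia.
rewrite /gdist cardT; case: (v + w)%N h3 => [|[|[|k]]] //= _.
rewrite in_ball0 in_ball1 in_ball2 eq_sym (negbTE nxy) /=.
by rewrite (negbTE nexy).
Qed.

Lemma sp_adj c r : E c r -> sp_nbr E c r = [set r].
Proof.
move=> hcr; apply/setP => y; rewrite !inE (gdist1 _ _ hcr) eqSS gdist0.
rewrite eq_sym; case: eqP => [->|]; by rewrite ?andbF ?andbT.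
Qed.

Lemma sp_same c r : c != r -> ~~ E c r -> sp_nbr E c r = nbr E c.
Proof.
move=> ncr necr; apply/setP => y; rewrite !inE (gdist2 _ _ ncr necr).
case: (boolP (E c y)) => //= hcy.
rewrite gdist1 //; move: hcy necr; rewrite !EE negbK => /negPf h /eqP <-.
by rewrite eq_sym h.
Qed.

Lemma sp_sub c r : sp_nbr E c r \subset nbr E c.
Proof. by apply/fintype.subsetP => y; rewrite !inE => /andP[]. Qed.


Variables (R : realType) (theta : R).

Definition cpf (n : nat) (a b : bool) : R :=
  if a == b then 0 else
  if odd n then theta * (sz b)%:R^-1 + (1 - theta) else (sz a)%:R^-1.

Definition stepK (n : nat) (k : bool * bool) : bool * bool :=
  if odd n then (~~ k.1, k.2) else (k.1, ~~ k.2).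

Lemma sum_if_eq (F : T -> R) a : \sum_x (if x == a then F x else 0) = F a.
Proof. by rewrite -big_mkcond big_pred1_eq. Qed.

Lemma sum_if_set (A : {set T}) (a : R) : \sum_x (if x \in A then a else 0) = a *+ #|A|.
Proof. by rewrite -big_mkcond sumr_const. Qed.

Lemma sum_if_E x (a : R) : \sum_y (if E x y then a else 0) = a *+ deg E x.
Proof. by rewrite /deg -sum_if_set; apply: eq_bigr => y _; rewrite inE. Qed.

Lemma inv_deg x : ((deg E x)%:R^-1 : R) *+ deg E x = 1.
Proof.
rewrite -(mulr_natr ((deg E x)%:R^-1 : R)) mulVf //; rewrite pnatr_eq0 -lt0n; exact: deg_gt0.
Qed.

Lemma tr_tot n c r : c != r -> \sum_c' \sum_r' Defs.tr E theta n c r c' r' = 1.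
Proof.
move=> ncr; rewrite /Defs.tr; case: (odd n).
- rewrite /cop_tr.
  rewrite (eq_bigr (fun c' => theta * (if E c c' then (deg E c)%:R^-1 else 0) +
      (1 - theta) * (if c' \in sp_nbr E c r then (#|sp_nbr E c r|%:R)^-1 else 0))); last first.
    move=> c' _; exact: (sum_if_eq (fun _ => _) r).
  rewrite big_split /= -!mulr_sumr sum_if_E sum_if_set inv_deg mulr1.
  have [hcr|hcr] := boolP (E c r).
  + rewrite sp_adj // cards1 mulr1n invr1 mulr1; ring.
  + rewrite sp_same // -/(deg E c) inv_deg mulr1; ring.
- rewrite /robber_tr (bigD1 c) //= [X in _ + X]big1 ?addr0.
  + by rewrite eqxx /= sum_if_E inv_deg.
  + by move=> c' /negbTE h; apply: big1 => r' _; rewrite h.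
Qed.

Lemma tr_cap n c r : c != r -> \sum_x Defs.tr E theta n c r x x = cpf n (side c) (side r).
Proof.
move=> ncr; rewrite /Defs.tr /cpf; case: (odd n).
- rewrite /cop_tr (sum_if_eq (fun x => _)).
  have [hcr|hcr] := boolP (E c r).
  + move: (hcr); rewrite EE => /negbTE ->.
    rewrite sp_adj // inE eqxx cards1 invr1 mulr1 degE.
    by move: hcr; rewrite EE; case: (side c); case: (side r).
  + move: (hcr); rewrite EE negbK => ->.
    rewrite ?(negbTE hcr) sp_same // inE (negbTE hcr); ring.
- rewrite /robber_tr.
  rewrite (eq_bigr (fun x => if x == c then (if E r x then (deg E r)%:R^-1 else 0) else 0)); last first.
    by move=> x _; case: (x == c).
  rewrite (sum_if_eq (fun x => _)) EE degE eq_sym.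
  by case: (side c); case: (side r).
Qed.

Lemma tr_supp n c r c' r' : Defs.tr E theta n c r c' r' != 0 ->
  (side c', side r') = stepK n (side c, side r).
Proof.
rewrite /Defs.tr /stepK; case: (odd n) => /=.
- rewrite /cop_tr; have [->|h] := eqVneq r' r; last by rewrite eqxx.
  rewrite ?eqxx.
  case: (boolP (E c c')) => hcc'.
    by move: hcc'; rewrite EE; case: (side c); case: (side c').
  have -> : (c' \in sp_nbr E c r) = false.
    apply/negbTE; apply: contra hcc' => h.
    by have := fintype.subsetP (sp_sub c r) _ h; rewrite inE.
  by rewrite !mulr0 addr0 eqxx.
- rewrite /robber_tr; case: (boolP ((c' == c) && E r r')); last by rewrite eqxx.
  by case/andP => /eqP -> ; rewrite EE; case: (side r); case: (side r').
Qed.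


Lemma sum3 (F : T -> T -> T -> R) :
  \sum_a \sum_b \sum_c F a b c = \sum_b \sum_c \sum_a F a b c.
Proof.
rewrite exchange_big; apply: eq_bigr => b _; exact: exchange_big.
Qed.

Lemma sum4 (F : T -> T -> T -> T -> R) :
  \sum_a \sum_b \sum_c \sum_d F a b c d = \sum_c \sum_d \sum_a \sum_b F a b c d.
Proof.
transitivity (\sum_a \sum_c \sum_b \sum_d F a b c d).
  by apply: eq_bigr => a _; exact: exchange_big.
rewrite exchange_big; apply: eq_bigr => c _.
transitivity (\sum_a \sum_d \sum_b F a b c d).
  by apply: eq_bigr => a _; exact: exchange_big.
exact: exchange_big.
Qed.

Variables (c0 r0 : T).
Hypothesis h0 : c0 != r0.

Fixpoint Kn (n : nat) : bool * bool :=
  match n with 0 => (side c0, side r0) | n'.+1 => stepK n' (Kn n') end.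

Local Notation al := (alive E theta c0 r0).

Lemma alive_supp n c r : al n c r != 0 -> c != r /\ (side c, side r) = Kn n.
Proof.
elim: n c r => [|n IH] c r /=.
- case: (boolP ((c == c0) && (r == r0))) => [/andP[/eqP -> /eqP ->] _ | _]; last by rewrite eqxx.
  by split.
- case: (boolP (c == r)) => [_|ncr]; first by rewrite eqxx.
  move=> hs; split => //.
  case: (boolP [exists c1, [exists r1, al n c1 r1 * Defs.tr E theta n c1 r1 c r != 0]]).
  + case/existsP => c1 /existsP [r1]; rewrite mulf_eq0 negb_or => /andP[ha ht].
    have [_ hK] := IH _ _ ha.
    by rewrite (tr_supp _ _ _ _ _ ht) hK.
  + move/existsPn => hn; move: hs; rewrite big1 ?eqxx // => c1 _; apply: big1 => r1 _.
    by have := hn c1; move/existsPn/(_ r1); rewrite negbK => /eqP.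
Qed.

Definition mass n := \sum_c \sum_r al n c r.
Definition cpn n := cpf n (Kn n).1 (Kn n).2.

Lemma capt_eq n : capt E theta c0 r0 n = mass n * cpn n.
Proof.
rewrite /capt /mass mulr_suml; apply: eq_bigr => c _; rewrite mulr_suml.
apply: eq_bigr => r _.
have [z|nz] := eqVneq (al n c r) 0; first by rewrite z !mul0r.
have [ncr hK] := alive_supp _ _ _ nz.
by rewrite tr_cap // /cpn -hK.
Qed.

Lemma mass0 : mass 0 = 1.
Proof.
rewrite /mass /=.
rewrite (eq_bigr (fun c => if c == c0 then \sum_r (if r == r0 then 1 else 0) else 0)).
  by rewrite (sum_if_eq (fun _ => _)) (sum_if_eq (fun _ => _)).
by move=> c _; case: (c == c0) => //=; apply: big1.
Qed.

Lemma mass_step n : mass n.+1 = mass n * (1 - cpn n).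
Proof.
set S := fun c' r' => \sum_c \sum_r al n c r * Defs.tr E theta n c r c' r'.
have A : forall c', \sum_r' al n.+1 c' r' = \sum_r' S c' r' - S c' c'.
  move=> c'; rewrite [in RHS](bigD1 c') //= addrC addrK.
  rewrite (bigD1 c') //= eqxx add0r; apply: eq_bigr => r' h.
  have -> : (c' == r') = false by rewrite eq_sym; apply: negbTE.
  by [].
rewrite [mass n.+1]/mass (eq_bigr _ (fun c' _ => A c')) sumrB.
have B1 : \sum_c' \sum_r' S c' r' = mass n.
  rewrite /S sum4 /mass; apply: eq_bigr => c _; apply: eq_bigr => r _.
  under eq_bigr do rewrite -mulr_sumr.
  rewrite -mulr_sumr.
  have [z|nz] := eqVneq (al n c r) 0; first by rewrite z !mul0r.
  have [ncr _] := alive_supp _ _ _ nz.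
  by rewrite tr_tot // mulr1.
have B2 : \sum_c' S c' c' = capt E theta c0 r0 n.
  rewrite /S sum3 /capt; apply: eq_bigr => c _; apply: eq_bigr => r _.
  by rewrite mulr_sumr.
rewrite B1 B2 capt_eq; ring.
Qed.

Lemma Kn4 n : Kn (n + 4)%N = Kn n.
Proof.
rewrite !addnS addn0 /= /stepK !oddS.
by case: (odd n); case: (Kn n) => a b /=; rewrite !negbK.
Qed.

Lemma cpn4 n : cpn (n + 4)%N = cpn n.
Proof. by rewrite /cpn Kn4 /cpf oddD addbF. Qed.

Lemma ect_gen (x0 x1 x2 x3 V0 V1 V2 V3 : R) :
  cpn 0 = x0 -> cpn 1 = x1 -> cpn 2 = x2 -> cpn 3 = x3 ->
  V0 = 1 + (1 - x0) * V1 -> V1 = 1 + (1 - x1) * V2 ->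
  V2 = 1 + (1 - x2) * V3 -> V3 = 1 + (1 - x3) * V0 ->
  0 <= (1 - x0) * (1 - x1) * (1 - x2) * (1 - x3) ->
  (1 - x0) * (1 - x1) * (1 - x2) * (1 - x3) < 1 ->
  expected_capture_time E theta c0 r0 V0.
Proof.
move=> e0 e1 e2 e3 q0 q1 q2 q3 P0 P1.
rewrite /expected_capture_time.
have cE : capt E theta c0 r0 = fun n => mass n * cpn n by apply: funext => n; exact: capt_eq.
rewrite cE /=.
exact: (@chain4 R mass cpn x0 x1 x2 x3 V0 V1 V2 V3 mass0 mass_step cpn4 e0 e1 e2 e3 q0 q1 q2 q3 P0 P1).
Qed.

Lemma ectA (X Y : R) : 1 <= X -> 1 <= Y ->
  cpn 0 = X^-1 -> cpn 1 = 0 -> cpn 2 = Y^-1 -> cpn 3 = 0 ->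
  expected_capture_time E theta c0 r0 ((4 * X * Y - 3 * Y - X + 1) / (X + Y - 1)).
Proof.
move=> X1 Y1 e0 e1 e2 e3.
set EA := (4 * X * Y - 3 * Y - X + 1) / (X + Y - 1).
set EC := (4 * X * Y - 3 * X - Y + 1) / (X + Y - 1).
have X0 : X != 0 by apply/negP => /eqP h; move: X1; rewrite h; lra.
have Y0 : Y != 0 by apply/negP => /eqP h; move: Y1; rewrite h; lra.
have D0 : X + Y - 1 != 0 by apply/negP => /eqP h; lra.
have iX : 0 < X^-1 <= 1 by rewrite invr_gt0 invf_le1 ?X1 ?andbT; lra.
have iY : 0 < Y^-1 <= 1 by rewrite invr_gt0 invf_le1 ?Y1 ?andbT; lra.
apply: (ect_gen _ _ _ _ _ (1 + EC) EC (1 + EA) e0 e1 e2 e3).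
- rewrite /EA /EC; field; rewrite ?X0 ?D0 //.
- ring.
- rewrite /EA /EC; field; rewrite ?Y0 ?D0 //.
- ring.
- rewrite !subr0 !mulr1; nra.
- rewrite !subr0 !mulr1.
  have hX : X^-1 < 1 \/ Y^-1 < 1 \/ (X^-1 = 1 /\ Y^-1 = 1) by lra.
  nra.
Qed.

Lemma ectB (X Y : R) : 1 <= X -> 1 <= Y -> 0 <= theta <= 1 ->
  cpn 0 = 0 -> cpn 1 = theta * Y^-1 + (1 - theta) -> cpn 2 = 0 ->
  cpn 3 = theta * X^-1 + (1 - theta) ->
  expected_capture_time E theta c0 r0
    (2 * (X * Y + theta * X * (Y - 1)) / (X * Y - theta ^+ 2 * (X - 1) * (Y - 1))).
Proof.
move=> X1 Y1 /andP[t0 t1] e0 e1 e2 e3.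
set D := X * Y - theta ^+ 2 * (X - 1) * (Y - 1).
set EB := 2 * (X * Y + theta * X * (Y - 1)) / D.
set ED := 2 * (X * Y + theta * Y * (X - 1)) / D.
have X0 : X != 0 by apply/negP => /eqP h; move: X1; rewrite h; lra.
have Y0 : Y != 0 by apply/negP => /eqP h; move: Y1; rewrite h; lra.
have Dp : 0 < D.
  rewrite /D; have h1 : 0 <= (X - 1) * (Y - 1) by apply: mulr_ge0; lra.
  have h2 : theta ^+ 2 <= 1 by rewrite expr2; nra.
  nra.
have D0 : D != 0 by rewrite gt_eqF.
have iX : 0 < X^-1 <= 1 by rewrite invr_gt0 invf_le1 ?X1 ?andbT; lra.
have iY : 0 < Y^-1 <= 1 by rewrite invr_gt0 invf_le1 ?Y1 ?andbT; lra.
apply: (ect_gen _ _ _ _ _ (EB - 1) ED (ED - 1) e0 e1 e2 e3).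
- ring.
- rewrite /EB /ED /D; field; rewrite -/D ?Y0 ?D0 //.
- ring.
- rewrite /EB /ED /D; field; rewrite -/D ?X0 ?D0 //.
- rewrite !subr0 !mul1r.
  have -> : 1 - (theta * Y^-1 + (1 - theta)) = theta * (1 - Y^-1) by ring.
  have -> : 1 - (theta * X^-1 + (1 - theta)) = theta * (1 - X^-1) by ring.
  have ha : 0 <= theta * (1 - Y^-1) by apply: mulr_ge0 => //; lra.
  have hb : 0 <= theta * (1 - X^-1) by apply: mulr_ge0 => //; lra.
  rewrite ?mulr1; exact: mulr_ge0.
- rewrite !subr0 !mul1r.
  have -> : 1 - (theta * Y^-1 + (1 - theta)) = theta * (1 - Y^-1) by ring.
  have -> : 1 - (theta * X^-1 + (1 - theta)) = theta * (1 - X^-1) by ring.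
  have ha : 0 <= theta * (1 - Y^-1) <= 1 by apply/andP; split; nra.
  have hb : 0 <= theta * (1 - X^-1) < 1 by apply/andP; split; nra.
  rewrite ?mulr1; nra.
Qed.

End Graph.

Theorem mainTheorem5 (R : realType) (v w : nat) (theta : R) :
  (0 < v)%N -> (0 < w)%N -> 0 <= theta <= 1 ->
  let vr := (v%:R : R) in let wr := (w%:R : R) in
  (* Position 1: cop in V, robber in W *)
  (forall (i : 'I_v) (j : 'I_w),
     expected_capture_time (Kbip v w) theta (inl i) (inr j)
       ((4 * vr * wr - 3 * wr - vr + 1) / (vr + wr - 1))) /\
  (* Position 2: cop and robber at distinct vertices of V *)
  (forall (i1 i2 : 'I_v), i1 != i2 ->
     expected_capture_time (Kbip v w) theta (inl i1) (inl i2)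
       (2 * (vr * wr + theta * vr * (wr - 1))
          / (vr * wr - theta ^+ 2 * (vr - 1) * (wr - 1)))) /\
  (* Position 3: robber in V, cop in W *)
  (forall (i : 'I_v) (j : 'I_w),
     expected_capture_time (Kbip v w) theta (inr j) (inl i)
       ((4 * vr * wr - 3 * vr - wr + 1) / (vr + wr - 1))) /\
  (* Position 4: cop and robber at distinct vertices of W *)
  (forall (j1 j2 : 'I_w), j1 != j2 ->
     expected_capture_time (Kbip v w) theta (inr j1) (inr j2)
       (2 * (vr * wr + theta * wr * (vr - 1))
          / (vr * wr - theta ^+ 2 * (vr - 1) * (wr - 1)))).
Proof.
move=> hv hw ht vr wr.
have V1 : 1 <= vr by rewrite /vr ler1n.
have W1 : 1 <= wr by rewrite /wr ler1n.
split; [|split; [|split]].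
- move=> i j.
  by apply: (@ectA v w hv hw R theta (inl i) (inr j) isT vr wr V1 W1);
    rewrite /cpn /cpf /vr /wr /=.
- move=> i1 i2 hi.
  have h0 : (inl i1 : ('I_v + 'I_w)%type) != inl i2 by apply: contra hi => /eqP [->].
  by apply: (@ectB v w hv hw R theta (inl i1) (inl i2) h0 vr wr V1 W1 ht);
    rewrite /cpn /cpf /vr /wr /=.
- move=> i j.
  have -> : (4 * vr * wr - 3 * vr - wr + 1) / (vr + wr - 1)
          = (4 * wr * vr - 3 * vr - wr + 1) / (wr + vr - 1).
    by congr (_ / _); ring.
  by apply: (@ectA v w hv hw R theta (inr j) (inl i) isT wr vr W1 V1);
    rewrite /cpn /cpf /vr /wr /=.
- move=> j1 j2 hj.
  have h0 : (inr j1 : ('I_v + 'I_w)%type) != inr j2 by apply: contra hj => /eqP [->].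
  have -> : 2 * (vr * wr + theta * wr * (vr - 1)) / (vr * wr - theta ^+ 2 * (vr - 1) * (wr - 1))
      = 2 * (wr * vr + theta * wr * (vr - 1)) / (wr * vr - theta ^+ 2 * (wr - 1) * (vr - 1)).
    by congr (_ / _); ring.
  by apply: (@ectB v w hv hw R theta (inr j1) (inr j2) h0 wr vr W1 V1 ht);
    rewrite /cpn /cpf /vr /wr /=.
Qed.
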